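(* Let $r_1,r_2,r_3$ be fixed integers and $i,j,k$ fixed non-negative integers. For $n\ge0$ set $$\sigma^{(n)}_{ijk}=\sum_{v+w=i+j+k+n+r_3}(-1)^{v-i}\binom{n+r_1-i}{v-i}\binom{r_2-j}{w-j}.$$ Then there exist polynomials $p_1,p_2$ such that $\sigma^{(n)}_{ijk}=(-1)^n\big(p_1(n)+2^np_2(n)\big)$ for all sufficiently large $n$.
   Context: Binomial coefficients $\binom{x}{m}$ are the generalized ones $x(x-1)\cdots(x-m+1)/m!$ for integers $m\ge0$, and are $0$ for $m<0$; the sum runs over integers $v,w$ (only finitely many terms are nonzero for $n$ large). *)

(* Defs.v *)
From mathcomp Require Import all_boot all_order all_algebra.
Set Implicit Arguments. Unset Strict Implicit. Unset Printing Implicit Defensive.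
Import Order.TTheory GRing.Theory Num.Theory.
Local Open Scope ring_scope.

Definition binz (x m : int) : rat :=
  if m < 0 then 0
  else (\prod_(l < `|m|%N) ((x - l%:Z)%:~R : rat)) / ((`|m|%N)`!)%:R.

(* sigma^{(n)}_{ijk} = sum_{v+w = i+j+k+n+r3} (-1)^(v-i) C(n+r1-i, v-i) C(r2-j, w-j).
   Terms vanish unless v >= i and w >= j, i.e. unless v = i + t with
   0 <= t <= M := k + n + r3 (then w = i+j+k+n+r3 - v).  So the sum over all
   integers v, w is the finite sum below (empty when M < 0). *)
Definition sigma (r1 r2 r3 : int) (i j k n : nat) : rat :=
  let Ntot : int := (i + j + k + n)%:Z + r3 in
  let M : int := (k + n)%:Z + r3 in
  let cnt : nat := if 0 <= M then (`|M|%N).+1 else 0%N in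
  \sum_(t < cnt)
    let v : int := (i + t)%:Z in
    let w : int := Ntot - v in
    ((-1 : rat) ^ (v - i%:Z)) * binz (n%:Z + r1 - i%:Z) (v - i%:Z)
                              * binz (r2 - j%:Z) (w - j%:Z).

(* Main.v *)
Require Import Defs.
From mathcomp Require Import all_boot all_order all_algebra.
From mathcomp Require Import zify ring lra.
Import Order.TTheory GRing.Theory Num.Theory.
Local Open Scope ring_scope.

Lemma binzP (x : int) (p : nat) :
  binz x p = (\prod_(l < p) ((x - l%:Z)%:~R : rat)) / (p`!)%:R.
Proof. by []. Qed.

Lemma binzN (x m : int) : m < 0 -> binz x m = 0.
Proof. by rewrite /binz => ->. Qed.

Lemma binz0 (x : int) : binz x 0 = 1.
Proof. by rewrite binzP big_ord0 divr1. Qed.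

Lemma binz_pascal (x m : int) : binz x m = binz (x - 1) m + binz (x - 1) (m - 1).
Proof.
case: m => [p|p]; last first.
  by rewrite !binzN ?addr0 // NegzE; lia.
case: p => [|p].
  by rewrite binz0 binz0 binzN ?addr0.
have -> : (Posz p.+1 - 1) = Posz p by lia.
rewrite !binzP big_ord_recl big_ord_recr /=.
rewrite (eq_bigr (fun i : 'I_p => ((x - 1 - i%:Z)%:~R : rat))); last first.
  by move=> l _; congr (_%:~R); rewrite /bump /=; lia.
set P := \prod_(i < p) _.
rewrite factS natrM.
have h1 : (p`!)%:R != 0 :> rat by rewrite pnatr_eq0 -lt0n fact_gt0.
have h2 : (p.+1)%:R != 0 :> rat by rewrite pnatr_eq0.
rewrite !intrD !intrN /=.
field. by rewrite h1 -(natrD _ 1 p) h2.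
Qed.

Lemma binz_small (x m : int) : 0 <= x -> x < m -> binz x m = 0.
Proof.
case: x => [x|x] Hx; last by move: Hx; rewrite NegzE; lia.
case: m => [m|m] Hm; last by move: Hm; rewrite NegzE; lia.
have Hxm : (x < m)%N by move: Hm; lia.
rewrite binzP; apply/eqP; rewrite mulf_eq0; apply/orP; left.
clear Hm Hx; elim: m Hxm => // m IH Hxm.
rewrite big_ord_recr /= mulf_eq0; case: (ltngtP x m) => H.
- by rewrite IH.
- by move: Hxm H; lia.
- by rewrite H subrr orbT.
Qed.

Definition cnt (M : int) : nat := if 0 <= M then (`|M|%N).+1 else 0%N.
Definition S (a b M : int) : rat :=
  \sum_(t < cnt M) (-1) ^+ t * binz a t%:Z * binz b (M - t%:Z).

Lemma cnt_pos (m : nat) : cnt (Posz m) = m.+1.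
Proof. by []. Qed.
Lemma cnt_neg M : M < 0 -> cnt M = 0%N.
Proof. by rewrite /cnt ltNge => /negbTE ->. Qed.
Lemma cnt_pred (m : nat) : cnt (Posz m - 1) = m.
Proof. by case: m => [|m] //; have -> : Posz m.+1 - 1 = Posz m by lia. Qed.
Lemma S_neg a b M : M < 0 -> S a b M = 0.
Proof. by move=> H; rewrite /S cnt_neg // big_ord0. Qed.

Lemma S_R1 a b M : S a b M = S a (b - 1) M + S a (b - 1) (M - 1).
Proof.
case: M => [m|m]; last by rewrite !S_neg ?addr0 // NegzE; lia.
rewrite /S cnt_pos cnt_pred.
under eq_bigr do rewrite (binz_pascal b) mulrDr.
rewrite big_split /=; congr (_ + _).
rewrite big_ord_recr /=.
have -> : binz (b - 1) (m%:Z - m%:Z - 1) = 0 by rewrite binzN //; lia.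
rewrite mulr0 addr0.
by apply: eq_bigr => t _; congr (_ * binz _ _); lia.
Qed.

Lemma S_R2 a b M : S a b M = S (a - 1) b M - S (a - 1) b (M - 1).
Proof.
case: M => [m|m]; last by rewrite !S_neg ?subr0 // NegzE; lia.
rewrite /S cnt_pos cnt_pred.
under eq_bigr do rewrite (binz_pascal a) mulrDr mulrDl.
rewrite big_split /=; congr (_ + _).
rewrite big_ord_recl /=.
have -> : binz (a - 1) (0%:Z - 1) = 0 by rewrite binzN //; lia.
rewrite mulr0 mul0r add0r.
rewrite -sumrN; apply: eq_bigr => t _.
rewrite /bump /= exprS.
have -> : (Posz (1 + t) - 1) = Posz t by lia.
have -> : (Posz m - Posz (1 + t)) = (Posz m - 1 - (t : nat)%:Z) by lia.
by rewrite !mulN1r !mulNr.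
Qed.

Definition D (f : nat -> rat) : nat -> rat := fun n => f n.+1 - f n.
Definition Dn (k : nat) (f : nat -> rat) : nat -> rat := iter k D f.

Lemma DnS k f n : Dn k.+1 f n = Dn k f n.+1 - Dn k f n.
Proof. by []. Qed.
Lemma Dn0 f n : Dn 0 f n = f n.
Proof. by []. Qed.
Lemma DnSr k f n : Dn k.+1 f n = Dn k (D f) n.
Proof. by rewrite /Dn iterSr. Qed.
Lemma DnD k l f n : Dn (k + l) f n = Dn k (Dn l f) n.
Proof. by rewrite /Dn iterD. Qed.

Lemma Dn_ext N f g : (forall n, (N <= n)%N -> f n = g n) ->
  forall k n, (N <= n)%N -> Dn k f n = Dn k g n.
Proof.
move=> H; elim=> [|k IH] n Hn; first exact: H.
by rewrite !DnS !IH //; apply: leqW.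
Qed.
Arguments Dn_ext [N f g].

Lemma Dn_add k f g n : Dn k (fun n => f n + g n) n = Dn k f n + Dn k g n.
Proof.
elim: k n => [|k IH] n //; rewrite !DnS !IH; ring.
Qed.

Lemma Dn_scale k c f n : Dn k (fun n => c * f n) n = c * Dn k f n.
Proof.
elim: k n => [|k IH] n //; rewrite !DnS !IH; ring.
Qed.

Lemma Dn_sum k m (F : nat -> nat -> rat) n :
  Dn k (fun n => \sum_(i < m) F i n) n = \sum_(i < m) Dn k (F i) n.
Proof.
elim: k n => [|k IH] n //; rewrite !DnS !IH -sumrB.
by apply: eq_bigr => i _; rewrite DnS.
Qed.

Lemma Dn_shift k f n : Dn k (fun n => f n.+1) n = Dn k f n.+1.
Proof.
elim: k n => [|k IH] n //; by rewrite !DnS !IH.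
Qed.

Lemma Dn_zero N f : (forall n, (N <= n)%N -> f n = 0) ->
  forall k n, (N <= n)%N -> Dn k f n = 0.
Proof.
move=> H k n Hn; rewrite (Dn_ext (g:=fun _ => 0) H) //.
elim: k n {Hn} => [|k IH] n //; by rewrite DnS !IH subrr.
Qed.
Arguments Dn_zero [N f].

Definition PS (f : nat -> rat) :=
  exists K N, forall n, (N <= n)%N -> Dn K f n = 0.

Lemma PS_up K N f : (forall n, (N <= n)%N -> Dn K f n = 0) ->
  forall k n, (N <= n)%N -> Dn (k + K) f n = 0.
Proof. by move=> H k n Hn; rewrite DnD (Dn_zero H). Qed.
Arguments PS_up [K N f].

Lemma PS_ext f g N : PS f -> (forall n, (N <= n)%N -> g n = f n) -> PS g.
Proof.
move=> [K [N1 H]] E; exists K, (maxn N N1) => n Hn.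
rewrite (Dn_ext E) ?H //; move: Hn; lia.
Qed.

Lemma PS_add f g : PS f -> PS g -> PS (fun n => f n + g n).
Proof.
move=> [K1 [N1 H1]] [K2 [N2 H2]]; exists (K2 + K1)%N, (maxn N1 N2) => n Hn.
rewrite Dn_add (PS_up H1); last by move: Hn; lia.
rewrite addnC (PS_up H2) ?addr0 //; move: Hn; lia.
Qed.

Lemma PS_scale c f : PS f -> PS (fun n => c * f n).
Proof.
by move=> [K [N H]]; exists K, N => n Hn; rewrite Dn_scale H ?mulr0.
Qed.

Lemma PS_const c : PS (fun _ => c).
Proof. by exists 1%N, 0%N => n _; rewrite DnS subrr. Qed.

Lemma PS_shift f : PS f -> PS (fun n => f n.+1).
Proof.
by move=> [K [N H]]; exists K, N => n Hn; rewrite Dn_shift H //; apply: leqW.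
Qed.

Lemma PS_D f : PS (D f) -> PS f.
Proof. by move=> [K [N H]]; exists K.+1, N => n Hn; rewrite DnSr H. Qed.

Arguments PS_ext [f g] N.
Arguments PS_add [f g].
Arguments PS_scale c [f].
Arguments PS_shift [f].
Arguments PS_D [f].

Definition F (f : nat -> rat) := exists P Q N, PS P /\ PS Q /\
  forall n, (N <= n)%N -> f n = (-1) ^+ n * (P n + 2 ^+ n * Q n).

Lemma F_ext f g N : F f -> (forall n, (N <= n)%N -> g n = f n) -> F g.
Proof.
move=> [P [Q [N1 [HP [HQ H]]]]] E; exists P, Q, (maxn N N1); split=> // ; split=> // n Hn.
rewrite E ?H //; move: Hn; lia.
Qed.

Lemma F_add f g : F f -> F g -> F (fun n => f n + g n).
Proof.
move=> [P [Q [N1 [HP [HQ H]]]]] [P' [Q' [N2 [HP' [HQ' H']]]]].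
exists (fun n => P n + P' n), (fun n => Q n + Q' n), (maxn N1 N2).
split; first exact: PS_add. split; first exact: PS_add.
move=> n Hn; rewrite H ?H'; [ring | move: Hn; lia | move: Hn; lia].
Qed.

Arguments F_ext [f g] N.
Arguments F_add [f g].

Lemma F_rec h : F (fun n => h n.+1 + 2 * h n) -> F h.
Proof.
move=> [P [Q [N0 [[K [N1 HK]] [HQ Hg]]]]].
pose A n := \sum_(k < K) Dn k P n.
pose B n := \sum_(m < n) (- Q m / 2).
have HA : forall n, (N1 <= n)%N -> A n.+1 = 2 * A n - P n.
  move=> n Hn.
  have : A n.+1 - A n = A n - P n.
    rewrite /A -sumrB.
    have -> : \sum_(i < K) (Dn i P n.+1 - Dn i P n) = \sum_(i < K) Dn i.+1 P n.
      by apply: eq_bigr => i _; rewrite DnS.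
    have T := telescope_sumr (fun k => Dn k P n) (leq0n K).
    rewrite big_mkord in T.
    have T2 : \sum_(i < K) Dn i.+1 P n = \sum_(i < K) Dn i P n + (Dn K P n - Dn 0 P n).
      by rewrite -T -big_split /=; apply: eq_bigr => i _; ring.
    by rewrite T2 HK // Dn0; ring.
  move=> E; rewrite -[A n.+1](subrK (A n)) E; ring.
have HB : forall n, B n.+1 = B n - Q n / 2.
  by move=> n; rewrite /B big_ord_recr /= mulNr.
have PSA : PS A.
  exists K, N1 => n Hn; rewrite /A Dn_sum; apply: big1 => k _.
  by rewrite -DnD addnC (PS_up HK).
have PSB : PS B.
  apply: PS_D.
  have H1 := PS_scale (- (1/2)) HQ.
  apply: (PS_ext 0%N H1) => n _.
  rewrite /D HB; ring.
pose e n := h n - (-1) ^+ n * (A n + 2 ^+ n * B n).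
pose N := maxn N0 N1.
have He : forall n, (N <= n)%N -> e n.+1 = -2 * e n.
  move=> n Hn.
  have Hh : h n.+1 = (-1) ^+ n * (P n + 2 ^+ n * Q n) - 2 * h n.
    have HN0 : (N0 <= n)%N by move: Hn; rewrite /N; lia.
    rewrite -(Hg n HN0); ring.
  have HN1 : (N1 <= n)%N by move: Hn; rewrite /N; lia.
  rewrite /e Hh (HA n HN1) HB.
  by rewrite !exprS; field.
have He2 : forall m, e (N + m)%N = (-2) ^+ m * e N.
  elim=> [|m IH]; first by rewrite addn0 expr0 mul1r.
  by rewrite addnS He ?IH ?exprS ?mulrA // leq_addr.
exists A, (fun n => B n + e N / (-2) ^+ N), N.
split=> //; split; first exact: PS_add PSB (PS_const _).
move=> n Hn; rewrite -(subnKC Hn).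
have -> : h (N + (n - N))%N = e (N + (n - N))%N + (-1) ^+ (N + (n - N)) * (A (N + (n - N))%N + 2 ^+ (N + (n - N)) * B (N + (n - N))%N).
  by rewrite /e; ring.
rewrite He2.
have m2 : forall k, (-2 : rat) ^+ k = (-1) ^+ k * 2 ^+ k.
  by move=> k; rewrite -exprMn mulN1r.
rewrite !m2 !exprD.
have n1 : (-1 : rat) ^+ N != 0 by rewrite signr_eq0.
have n2 : (2 : rat) ^+ N != 0 by rewrite expf_neq0.
field; by rewrite n1 n2.
Qed.

Lemma PS_binz (e : nat) : forall d c : int, d - c < e%:Z ->
  PS (fun n => binz (n%:Z + d) (n%:Z + c)).
Proof.
elim: e => [|e IH] d c Hdc.
  apply: (PS_ext (`|d|%N) (PS_const 0)) => n Hn.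
  apply: binz_small; lia.
apply: PS_D; apply: (PS_ext 0%N (IH d (c + 1) _)); first by lia.
move=> n _; rewrite /D.
have -> : binz ((n.+1)%:Z + d) ((n.+1)%:Z + c) =
  binz (n%:Z + d) (n%:Z + (c + 1)) + binz (n%:Z + d) (n%:Z + c).
  by rewrite binz_pascal; congr (binz _ _ + binz _ _); lia.
ring.
Qed.

Lemma S_b0 a (m : nat) : S a 0 (Posz m) = (-1) ^+ m * binz a m.
Proof.
rewrite /S cnt_pos big_ord_recr /= big1.
  by rewrite add0r subrr binz0 mulr1.
move=> t _; rewrite (@binz_small 0) ?mulr0 //; have := ltn_ord t; lia.
Qed.

Lemma sign_abs (n : nat) (c : int) : 0 <= n%:Z + c ->
  ((-1) ^+ absz (n%:Z + c) : rat) = (-1) ^+ n * (-1) ^+ absz c.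
Proof.
case: c => [c|c] H.
  by rewrite -exprD.
have E : n = (absz (n%:Z + Negz c)%R + c.+1)%N by move: H; rewrite NegzE; lia.
rewrite {2}E exprD -mulrA -exprD.
have -> : absz (Negz c) = c.+1 by [].
by rewrite addnn -mul2n mulnC exprM sqrr_sign mulr1.
Qed.

Definition G (d b c : int) (n : nat) : rat := S (n%:Z + d) b (n%:Z + c).

Lemma F_G0 d c : F (G d 0 c).
Proof.
exists (fun n => (-1) ^+ absz c * binz (n%:Z + d) (n%:Z + c)), (fun _ => 0), (absz c).
split; first by apply: PS_scale; apply: (@PS_binz (absz (d - c)).+1); lia.
split; first exact: PS_const.
move=> n Hn; rewrite /G.
have Hm : n%:Z + c = (absz (n%:Z + c))%:Z by lia.
rewrite Hm S_b0 -Hm sign_abs; last by lia.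
rewrite mulr0 addr0 mulrA //.
Qed.

Lemma F_Gup d b c : F (G d b c) -> F (G d b (c - 1)) -> F (G d (b + 1) c).
Proof.
move=> H1 H2; apply: (F_ext 0%N (F_add H1 H2)) => n _.
by rewrite /G S_R1; congr (S _ _ _ + S _ _ _); lia.
Qed.

Lemma F_Gdown b : (forall d c, F (G d b c)) -> forall d c, F (G d (b - 1) c).
Proof.
move=> H d c; apply: F_rec; apply: (F_ext 0%N (H d (c + 1))) => n _.
rewrite /G.
have -> : (n.+1)%:Z + d = (n%:Z + d) + 1 by lia.
have -> : (n.+1)%:Z + c = (n%:Z + c) + 1 by lia.
set a := n%:Z + d; set M := n%:Z + c.
have E1 : S (a + 1) (b - 1) (M + 1) = S a (b - 1) (M + 1) - S a (b - 1) M.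
  by rewrite S_R2; congr (S _ _ _ - S _ _ _); lia.
have E2 : S a b (M + 1) = S a (b - 1) (M + 1) + S a (b - 1) M.
  by rewrite S_R1; congr (_ + S _ _ _); lia.
have -> : n%:Z + (c + 1) = M + 1 by rewrite /M; lia.
rewrite E1 E2; ring.
Qed.

Lemma F_G (b d c : int) : F (G d b c).
Proof.
move: d c.
have key : forall p : nat, (forall d c, F (G d p c)) /\ (forall d c, F (G d (- p%:Z) c)).
  elim=> [|p [IH1 IH2]]; first by split=> d c; apply: F_G0.
  split=> d c.
    have -> : (p.+1)%:Z = p%:Z + 1 by lia.
    by apply: F_Gup.
  have -> : - (p.+1)%:Z = - p%:Z - 1 by lia.
  exact: F_Gdown.
case: b => p; first by case: (key p).
by rewrite NegzE; case: (key p.+1).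
Qed.

Lemma newton K : forall f N, (forall n, (N <= n)%N -> Dn K f n = 0) ->
  forall m, f (N + m)%N = \sum_(k < K) Dn k f N * ('C(m, k))%:R.
Proof.
elim: K => [|K IH] f N H m.
  by rewrite big_ord0 -(Dn0 f) H // leq_addr.
have HD : forall n, (N <= n)%N -> Dn K (D f) n = 0.
  by move=> n Hn; rewrite -DnSr H.
have IHD := IH (D f) N HD.
elim: m => [|m IHm].
  rewrite addn0 big_ord_recl big1 ?bin0 ?addr0 ?mulr1 //.
  by move=> k _; rewrite bin0n mulr0.
have -> : f (N + m.+1)%N = f (N + m)%N + D f (N + m)%N by rewrite /D addnS; ring.
rewrite IHm IHD big_ord_recl [in RHS]big_ord_recl !bin0.
rewrite -addrA; congr (_ + _).
rewrite -big_split /=; apply: eq_bigr => k _.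
rewrite /bump /= add0n -DnSr binS natrD mulrDr; congr (_ + _).
Qed.

Lemma binz_nat (m k : nat) : binz (Posz m) (Posz k) = ('C(m, k))%:R.
Proof.
elim: m k => [|m IH] [|k].
- by rewrite binz0.
- by rewrite binz_small // bin0n.
- by rewrite binz0 bin0.
- rewrite binz_pascal.
  have -> : Posz m.+1 - 1 = Posz m by lia.
  have -> : Posz k.+1 - 1 = Posz k by lia.
  by rewrite !IH binS natrD.
Qed.

Lemma PS_poly f : PS f -> exists p : {poly rat}, exists N : nat,
  forall n, (N <= n)%N -> f n = p.[n%:R].
Proof.
move=> [K [N H]].
exists (\sum_(k < K) (Dn k f N / (k`!)%:R) *: \prod_(l < k) ('X - (N%:R + l%:R)%:P)), N.
move=> n Hn; rewrite -(subnKC Hn) (newton K f N H) horner_sum.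
apply: eq_bigr => k _; rewrite hornerZ horner_prod -binz_nat binzP -mulrA.
congr (_ * _); rewrite mulrC; congr (_ * _).
apply: eq_bigr => l _; rewrite hornerXsubC.
rewrite rmorphB /=.
have -> : (((n - N)%N)%:Z)%:~R = ((n - N)%N)%:R :> rat by [].
have -> : ((l : nat)%:Z)%:~R = (l : nat)%:R :> rat by [].
ring.
Qed.

Theorem lemma11 (r1 r2 r3 : int) (i j k : nat) :
  exists (p1 p2 : {poly rat}) (N : nat),
    forall n : nat, (N <= n)%N ->
      sigma r1 r2 r3 i j k n
      = (-1) ^+ n * (p1.[n%:R] + 2 ^+ n * p2.[n%:R]).
Proof.
have [P [Q [N0 [HP [HQ H]]]]] := F_G (r2 - j%:Z) (r1 - i%:Z) (k%:Z + r3).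
have [p1 [N1 H1]] := PS_poly P HP.
have [p2 [N2 H2]] := PS_poly Q HQ.
exists p1, p2, (maxn N0 (maxn N1 N2)) => n Hn.
have -> : sigma r1 r2 r3 i j k n = G (r1 - i%:Z) (r2 - j%:Z) (k%:Z + r3) n.
  rewrite /sigma /G /S /=.
  have -> : (k + n)%:Z + r3 = n%:Z + (k%:Z + r3) by lia.
  apply: eq_bigr => t _.
  have -> : (i + t)%:Z - i%:Z = t%:Z by lia.
  have -> : n%:Z + r1 - i%:Z = n%:Z + (r1 - i%:Z) by lia.
  congr (_ * binz _ _); move: (nat_of_ord t) => u; lia.
rewrite H ?H1 ?H2 //; move: Hn; lia.
Qed.
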